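(* Under the direct FIFO mechanism, it is a subgame-perfect equilibrium for drivers to accept all dispatches, to join the queue if and only if its length is at most $\bar Q=n_\ell+\frac{w_\ell}{c}\sum_{i\in\mathcal L}\mu_i$, and after joining never to leave without a rider nor move to the tail. Moreover, this equilibrium is individually rational and envy-free: for all $Q\ge0$, $\pi(q,Q,\sigma^*,\sigma^* )\ge 0$ for all $q\in[0,Q]$, and $\pi(q_1,Q,\sigma^*,\sigma^* )\ge\pi(q_2,Q,\sigma^*,\sigma^* )$ whenever $0\le q_1\le q_2\le Q$, where $\sigma^*$ denotes this strategy.
   Context: Model: continuous time, non-atomic, stationary; one origin with a queue of drivers. Destinations $\mathcal L=\{1,\dots,\ell\}$, rider arrival rates $\mu_i>0$, driver arrival rate $\lambda>0$, net earnings $w_1>w_2>\dots>w_\ell\ge0$ (a driver not joining or leaving without a rider gets $0$), driver waiting cost $c>0$ per unit time; riders have patience $P\in\mathbb Z_{>0}$ (cancel after the $P$-th decline). Queue length $Q\ge0$, positions $q\in[0,Q]$, $q=0$ head. Mechanisms are transparent and flexible: drivers know $Q$ and their position, see destination and earnings before deciding, are never penalized, may decline without losing position, move to the tail at any time, and leave (or not join) at any time. Strategy $\sigma=(\alpha,\beta,\gamma)$: $\alpha(q,Q,i)$ = probability of accepting an offered trip to $i$; $\beta(q,Q)$ = probability of moving to the tail; $\gamma(q,Q)$ = probability of leaving without a rider (at $q=Q$: not joining). $\pi(q,Q,\sigma,\sigma')$ = expected continuation payoff (net earnings minus $c$ times future waiting time) of a driver at $q$, length $Q$, using $\sigma$ while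 all other current and future drivers use $\sigma'$. SPE: $\pi(q,Q,\sigma^*,\sigma^* )\ge\pi(q,Q,\sigma,\sigma^* )$ for all feasible $\sigma$, all $Q\ge0$, $q\in[0,Q]$. Notation: $n_1=0$, $n_i=\sum_{j=1}^{i-1}(w_j-w_i)\mu_j/c$ for $i\ge2$ (equivalently $n_i=\sum_{j=1}^{i-1}\frac{w_j-w_{j+1}}{c}\sum_{k=1}^j\mu_k$), and $\bar Q=\sum_i w_i\mu_i/c$. Direct FIFO mechanism: when the queue length is $Q\ge n_i$, a trip to location $i$ is offered first to the driver at position $n_i$ and, after each decline, to the next driver further down the queue (FIFO order starting at $n_i$); when $Q<n_i$, trips to $i$ are not dispatched. *)

(* Defs.v *)
(* Fluid ("non-atomic") ride-hailing queue model, direct FIFO mechanism.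
   Destinations are indexed 0-based: i = 0 .. ell-1 (paper's i+1).
   Positions q in [0,Q] measure the mass of drivers ahead (q = 0 is the head). *)
From Stdlib Require Import Reals List Arith.
Import ListNotations.
Open Scope R_scope.

(** Primitive data of the model (rider patience is kept as a separate binder
    in the theorem; it plays no role when all other drivers accept). *)
Record Model := {
  ell : nat;            (* number of destinations *)
  mu  : nat -> R;       (* rider arrival rate to destination i *)
  w   : nat -> R;       (* net earnings of a trip to destination i *)
  lam : R;              (* driver arrival rate *)
  c   : R               (* waiting cost per unit time *)
}.

Definition rsum (f : nat -> R) (k : nat) : R :=
  fold_right Rplus 0 (map f (seq 0 k)).

Definition nn (M : Model) (i : nat) : R :=
  rsum (fun j => (w M j - w M i) * mu M j / c M) i.

Definition Qbar (M : Model) : R :=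
  rsum (fun i => w M i * mu M i / c M) (ell M).

Definition Mcum (M : Model) (k : nat) : R := rsum (mu M) k.

(** Total rate of trips dispatched at positions strictly ahead of x
    (= speed at which a non-deviating position x advances toward the head),
    resp. at positions ahead of or at x. *)
Definition rate_lt (M : Model) (x : R) : R :=
  rsum (fun i => if Rlt_dec (nn M i) x then mu M i else 0) (ell M).
Definition rate_le (M : Model) (x : R) : R :=
  rsum (fun i => if Rle_dec (nn M i) x then mu M i else 0) (ell M).

(** Time needed by a driver who stays in the queue (no tail move) to advance
    from position a down to position b (0 <= b <= a): on the segment
    [n_k, n_(k+1)] (the last segment being [n_(ell-1), +oo)) the driver
    advances at speed Mcum (k+1) = total rate of the trips dispatched to
    the positions n_0 < ... < n_k ahead of him. *)
Definition seg_hi (M : Model) (a : R) (k : nat) : R :=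
  if Nat.ltb (S k) (ell M) then nn M (S k) else a.
Definition tau (M : Model) (a b : R) : R :=
  rsum (fun k => Rmax 0 (Rmin a (seg_hi M a k) - Rmax b (nn M k)) / Mcum M (S k))
       (ell M).

(** Environment: all other (current and future) drivers use sigma*, i.e.
    accept every dispatch, stay iff their position is <= Qbar (in particular
    a newly arriving driver joins iff the queue length is <= Qbar), never move
    to the tail.  Qenv t is the queue length at time t >= 0 (after drivers
    beyond Qbar have left at time 0).  It solves the (Filippov) fluid ODE
    dQ/dt = lam * [joining] - (rate of dispatched trips), with sliding at
    the points where the drift changes sign; env_vel x is its velocity. *)
Definition env_vel (M : Model) (x : R) : R :=
  if Rlt_dec x (Qbar M) then
    if Rlt_dec 0 (lam M - rate_le M x) then lam M - rate_le M x
    else if Rlt_dec 0 x then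
           (if Rlt_dec (lam M - rate_lt M x) 0 then lam M - rate_lt M x else 0)
         else 0
  else if Rlt_dec 0 x then
         (if Rlt_dec (lam M - rate_lt M x) 0 then lam M - rate_lt M x else 0)
       else 0.

Definition env_path (M : Model) (Q0 : R) (Qenv : R -> R) : Prop :=
  Qenv 0 = Rmin Q0 (Qbar M) /\
  (forall t, 0 < t -> continuity_pt Qenv t) /\
  (forall t, 0 <= t -> exists d, 0 < d /\
      forall u, t <= u <= t + d -> Qenv u = Qenv t + env_vel M (Qenv t) * (u - t)).

(** Behaviour of a single (measure-zero) deviating driver against that
    environment.  Since the environment is deterministic, a (pure) deviation
    is described by its realisation: a finite list of segments, each
    "advance from the current position a to position b (0 <= b <= a), wait
    e >= 0 more time units (only possible at the head b = 0, where the driver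
    does not move; every dispatch declined meanwhile keeps his position),
    then move to the tail", followed by a final segment ending with a
    terminal action: accept the trip to i (possible only when offered,
    i.e. at position b = n_i with queue length >= n_i) or leave without a
    rider.  Declining offers never changes the position. *)
Inductive action := Accept (i : nat) | Leave.

Record Plan := {
  moves : list (R * R);     (* segments (b, e) each followed by a tail move *)
  last_seg : R * R;
  act : action
}.

Definition seg_ok (a b e : R) : Prop :=
  0 <= b <= a /\ 0 <= e /\ (e <> 0 -> b = 0).

(** reach: starting at time t at position a, executing the segments leads to
    time t' and position a' (each segment ends with a move to the tail). *)
Fixpoint reach (M : Model) (Qenv : R -> R) (l : list (R * R))
         (t a t' a' : R) : Prop :=
  match l with
  | [] => t' = t /\ a' = a
  | (b, e) :: l' =>
      seg_ok a b e /\
      reach M Qenv l' (t + tau M a b + e) (Qenv (t + tau M a b + e)) t' a'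
  end.

(** Drivers ahead of him at positions > Qbar leave at
    time 0, so his effective initial position is min q Qbar. *)
Definition plan_value (M : Model) (Qenv : R -> R) (q : R) (pl : Plan) (v : R)
  : Prop :=
  exists t1 a1, reach M Qenv (moves pl) 0 (Rmin q (Qbar M)) t1 a1 /\
    seg_ok a1 (fst (last_seg pl)) (snd (last_seg pl)) /\
    (let b := fst (last_seg pl) in
     let T := t1 + tau M a1 b + snd (last_seg pl) in
     match act pl with
     | Accept i => (i < ell M)%nat /\ b = nn M i /\ nn M i <= Qenv T /\
                   v = w M i - c M * T
     | Leave => v = - (c M * T)
     end).

(** k*(q): index of the largest n_k <= q (the first trip offered to a driver
    at position q moving to the head). *)
Definition kstar (M : Model) (q : R) : nat :=
  pred (length (filter (fun i => if Rle_dec (nn M i) q then true else false)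
                       (seq 0 (ell M)))).

(** The realisation of sigma* for a driver at position q: if q <= Qbar stay,
    never move to the tail, accept the first offered trip (to k*(q), offered
    at position n_(k*(q))); if q > Qbar leave at once (for q = Q: don't join). *)
Definition sigma_star_plan (M : Model) (q : R) : Plan :=
  if Rle_dec q (Qbar M)
  then {| moves := []; last_seg := (nn M (kstar M q), 0); act := Accept (kstar M q) |}
  else {| moves := []; last_seg := (Qbar M, 0); act := Leave |}.

(** pi(q, Q, sigma-star, sigma-star); it does not depend on Q. *)
Definition pi_star (M : Model) (q : R) : R :=
  if Rle_dec q (Qbar M)
  then w M (kstar M q) - c M * tau M q (nn M (kstar M q))
  else 0.

(* Main.v *)
Require Import Defs.
From Stdlib Require Import Reals List Lra Lia Classical.
Import ListNotations.
Open Scope R_scope.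

Lemma fold_Rplus_init (l : list R) (z : R) :
  fold_right Rplus z l = fold_right Rplus 0 l + z.
Proof. induction l; simpl; [lra|rewrite IHl; lra]. Qed.

Lemma rsum_S f n : rsum f (S n) = rsum f n + f n.
Proof.
  unfold rsum. rewrite seq_S, map_app, fold_right_app. simpl.
  rewrite fold_Rplus_init. lra.
Qed.

Lemma rsum_0 f : rsum f 0 = 0.
Proof. reflexivity. Qed.

Lemma rsum_ext f g n : (forall i, (i < n)%nat -> f i = g i) -> rsum f n = rsum g n.
Proof.
  induction n; intros H; [reflexivity|]. rewrite !rsum_S, IHn, H; auto; lia.
Qed.

Lemma rsum_le f g n : (forall i, (i < n)%nat -> f i <= g i) -> rsum f n <= rsum g n.
Proof.
  induction n; intros H; [rewrite !rsum_0; lra|]. rewrite !rsum_S.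
  assert (f n <= g n) by (apply H; lia).
  assert (rsum f n <= rsum g n) by (apply IHn; intros; apply H; lia). lra.
Qed.

Lemma rsum_minus f g n : rsum (fun i => f i - g i) n = rsum f n - rsum g n.
Proof. induction n; [rewrite !rsum_0; lra|]. rewrite !rsum_S, IHn. lra. Qed.

Lemma rsum_scal f a n : rsum (fun i => f i * a) n = rsum f n * a.
Proof. induction n; [rewrite !rsum_0; lra|]. rewrite !rsum_S, IHn. lra. Qed.

Lemma rsum_zero n : rsum (fun _ => 0) n = 0.
Proof. induction n; [reflexivity|]. rewrite rsum_S, IHn. lra. Qed.

Lemma rsum_single f n k : (k < n)%nat -> (forall i, (i < n)%nat -> i <> k -> f i = 0) ->
  rsum f n = f k.
Proof.
  induction n; intros Hk H; [lia|]. rewrite rsum_S.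
  destruct (Nat.eq_dec k n).
  - subst. rewrite (rsum_ext f (fun _ => 0)), rsum_zero; [lra|].
    intros; apply H; lia.
  - rewrite IHn, (H n); try lra; try lia. intros; apply H; lia.
Qed.

Lemma rsum_zero_tail f m n : (m <= n)%nat -> (forall i, (m <= i < n)%nat -> f i = 0) ->
  rsum f n = rsum f m.
Proof.
  induction n; intros Hm H.
  - replace m with 0%nat by lia. reflexivity.
  - destruct (Nat.eq_dec m (S n)); [subst; reflexivity|].
    rewrite rsum_S, IHn, H; try lra; try lia. intros; apply H; lia.
Qed.

Lemma mono_from_local (F : R -> R) :
  (forall t, 0 <= t -> exists d, 0 < d /\ forall u, t <= u <= t + d -> F t <= F u) ->
  (forall t, 0 < t -> continuity_pt F t) ->
  forall t s, 0 <= t -> t <= s -> F t <= F s.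
Proof.
  intros Hloc Hcont t s Ht Hts.
  set (E := fun u => t <= u <= s /\ forall v, t <= v <= u -> F t <= F v).
  assert (Hb : bound E) by (exists s; intros u [Hu _]; lra).
  assert (He : exists x, E x).
  { exists t. split; [lra|]. intros v Hv. replace v with t by lra. lra. }
  destruct (completeness E Hb He) as [m [Hub Hlub]].
  assert (Htm : t <= m) by (apply Hub; destruct He as [x _]; split; [lra|];
    intros v Hv; replace v with t by lra; lra).
  assert (Hms : m <= s) by (apply Hlub; intros u [Hu _]; lra).
  assert (C1 : forall v, t <= v < m -> F t <= F v).
  { intros v Hv.
    assert (Hnub : ~ is_upper_bound E v) by (intro Hc; specialize (Hlub v Hc); lra).
    unfold is_upper_bound in Hnub. apply not_all_ex_not in Hnub. destruct Hnub as [u Hu].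
    apply imply_to_and in Hu. destruct Hu as [Eu Hu].
    destruct Eu as [_ Eu]. apply Eu. lra. }
  assert (C2 : F t <= F m).
  { destruct (Req_dec m t) as [->|Hne]; [lra|].
    destruct (Rle_dec (F t) (F m)) as [|Hlt]; [assumption|exfalso].
    specialize (Hcont m ltac:(lra)).
    unfold continuity_pt, continue_in, limit1_in, limit_in in Hcont. simpl in Hcont.
    destruct (Hcont (F t - F m) ltac:(lra)) as [alp [Halp Hc]].
    set (v := Rmax t (m - alp / 2)).
    assert (Hv1 : t <= v) by (unfold v; apply Rmax_l).
    assert (Hv2 : m - alp/2 <= v) by (unfold v; apply Rmax_r).
    assert (Hv3 : v < m) by (unfold v; apply Rmax_lub_lt; lra).
    specialize (Hc v). assert (Hd : Rdist (F v) (F m) < F t - F m).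
    { apply Hc. split. split; [exact I|lra]. unfold Rdist. rewrite Rabs_left; lra. }
    unfold Rdist in Hd. specialize (C1 v ltac:(lra)).
    pose proof (Rle_abs (F v - F m)). lra. }
  assert (C3 : m = s).
  { destruct (Rle_dec s m); [lra|exfalso].
    destruct (Hloc m ltac:(lra)) as [d [Hd Hu]].
    set (u' := Rmin s (m + d)).
    assert (Eu' : E u').
    { unfold E, u'. split. split; [apply Rmin_glb; lra|apply Rmin_l].
      intros v Hv. destruct (Rlt_dec v m). apply C1; lra.
      assert (v <= m + d) by (pose proof (Rmin_r s (m+d)); lra).
      specialize (Hu v ltac:(lra)). lra. }
    specialize (Hub u' Eu'). unfold u' in Hub.
    assert (m < Rmin s (m + d)) by (apply Rmin_glb_lt; lra). lra. }
  subst m. exact C2.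
Qed.

Lemma mono_lip_cont (f : R -> R) L z :
  (forall x y, x <= y -> f x <= f y /\ f y - f x <= (y - x) * L) -> 0 <= L ->
  continuity_pt f z.
Proof.
  intros H HL. unfold continuity_pt, continue_in, limit1_in, limit_in. simpl.
  intros eps Heps. exists (eps / (L + 1)). split.
  { apply Rdiv_lt_0_compat; lra. }
  intros x [_ Hx]. unfold Rdist in *.
  assert (Hb : Rabs (f x - f z) <= Rabs (x - z) * L).
  { destruct (Rle_dec x z).
    - destruct (H x z r). rewrite Rabs_left1, (Rabs_left1 (x - z)); lra.
    - destruct (H z x ltac:(lra)). rewrite Rabs_right, (Rabs_right (x - z)); lra. }
  assert (Rabs (x - z) * L <= eps / (L + 1) * L).
  { apply Rmult_le_compat_r; lra. }
  assert (eps / (L+1) * L < eps).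
  { apply (Rmult_lt_reg_r (L+1)); [lra|].
    replace (eps / (L + 1) * L * (L + 1)) with (eps * L) by (field; lra). nra. }
  lra.
Qed.

Definition Hyp (M : Model) : Prop :=
  (1 <= ell M)%nat /\ (forall i, (i < ell M)%nat -> 0 < mu M i) /\
  (forall i j, (i < j)%nat -> (j < ell M)%nat -> w M j < w M i) /\ 0 < c M.

Definition term (M : Model) j x b :=
  Rmax 0 (Rmin x (seg_hi M x j) - Rmax b (nn M j)) / Mcum M (S j).

Definition T (M : Model) x := tau M x 0.
Definition Tp (M : Model) x := T M x + Rmin x 0.

Lemma tau_term M a b : tau M a b = rsum (fun k => term M k a b) (ell M).
Proof. reflexivity. Qed.

Lemma nn_diff M n A B :
  c M <> 0 ->
  rsum (fun j => (w M j - A) * mu M j / c M) n =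
  rsum (fun j => (w M j - B) * mu M j / c M) n + (B - A) / c M * rsum (mu M) n.
Proof.
  intros Hc. induction n; [rewrite !rsum_0; lra|]. rewrite !rsum_S, IHn. field. auto.
Qed.

Lemma nn_0 M : nn M 0 = 0.
Proof. reflexivity. Qed.

Lemma nn_step M k : c M <> 0 ->
  nn M (S k) = nn M k + (w M k - w M (S k)) / c M * Mcum M (S k).
Proof.
  intros Hc. unfold nn at 1. rewrite rsum_S.
  rewrite (nn_diff M k (w M (S k)) (w M k) Hc). unfold nn, Mcum. rewrite rsum_S. field. auto.
Qed.

Lemma Mcum_pos M k : Hyp M -> (k < ell M)%nat -> 0 < Mcum M (S k).
Proof.
  intros [_ [Hmu _]] Hk. unfold Mcum. rewrite rsum_S.
  assert (0 <= rsum (mu M) k).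
  { rewrite <- (rsum_zero k). apply rsum_le. intros. left; apply Hmu; lia. }
  specialize (Hmu k Hk). lra.
Qed.

Lemma nn_lt M k : Hyp M -> (S k < ell M)%nat -> nn M k < nn M (S k).
Proof.
  intros H Hk. pose proof H as [_ [_ [Hw Hc]]]. rewrite nn_step by lra.
  assert (0 < Mcum M (S k)) by (apply Mcum_pos; auto; lia).
  assert (w M (S k) < w M k) by (apply Hw; lia).
  assert (0 < (w M k - w M (S k)) / c M) by (apply Rdiv_lt_0_compat; lra).
  assert (0 < (w M k - w M (S k)) / c M * Mcum M (S k)) by (apply Rmult_lt_0_compat; lra).
  lra.
Qed.

Lemma nn_mono M i j : Hyp M -> (i <= j)%nat -> (j < ell M)%nat -> nn M i <= nn M j.
Proof.
  intros H Hij Hj. induction j.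
  - replace i with 0%nat by lia. lra.
  - destruct (Nat.eq_dec i (S j)); [subst; lra|].
    specialize (IHj ltac:(lia) ltac:(lia)). pose proof (nn_lt M j H Hj). lra.
Qed.

Lemma nn_nonneg M k : Hyp M -> (k < ell M)%nat -> 0 <= nn M k.
Proof. intros. rewrite <- (nn_0 M). apply nn_mono; auto; lia. Qed.

Ltac dst := repeat match goal with
  | |- context [Rle_dec ?a ?b] => destruct (Rle_dec a b)
  | H : context [Rle_dec ?a ?b] |- _ => destruct (Rle_dec a b)
  end.

Lemma div_split X Y Z m : X = Y - Z -> X / m = Y / m - Z / m.
Proof. intros ->. unfold Rdiv. ring. Qed.

Ltac seg_facts M j :=
  let E := fresh "E" in
  unfold seg_hi; destruct (Nat.ltb (S j) (ell M)) eqn:E;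
  [apply Nat.ltb_lt in E | apply Nat.ltb_ge in E].

Lemma tau_split M a b : Hyp M -> 0 <= b <= a -> tau M a b = T M a - T M b.
Proof.
  intros H Hab. unfold T. rewrite !tau_term, <- rsum_minus. apply rsum_ext.
  intros j Hj. unfold term. apply div_split.
  pose proof (nn_nonneg M j H Hj).
  seg_facts M j.
  - pose proof (nn_lt M j H E). unfold Rmax, Rmin; dst; lra.
  - unfold Rmax, Rmin; dst; lra.
Qed.

Lemma T_mono M x y : Hyp M -> x <= y -> T M x <= T M y.
Proof.
  intros H Hxy. unfold T. rewrite !tau_term. apply rsum_le. intros j Hj. unfold term.
  pose proof (nn_nonneg M j H Hj). pose proof (Mcum_pos M j H Hj).
  unfold Rdiv. apply Rmult_le_compat_r; [left; apply Rinv_0_lt_compat; lra|].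
  seg_facts M j.
  - pose proof (nn_lt M j H E). unfold Rmax, Rmin; dst; lra.
  - unfold Rmax, Rmin; dst; lra.
Qed.

Lemma T_lip M x y : Hyp M -> x <= y ->
  T M y - T M x <= (y - x) * rsum (fun j => / Mcum M (S j)) (ell M).
Proof.
  intros H Hxy. unfold T. rewrite !tau_term, <- rsum_minus.
  rewrite Rmult_comm, <- rsum_scal. apply rsum_le. intros j Hj. unfold term.
  pose proof (nn_nonneg M j H Hj). pose proof (Mcum_pos M j H Hj).
  unfold Rdiv. rewrite <- Rmult_minus_distr_r, (Rmult_comm (/ _) (y - x)).
  apply Rmult_le_compat_r; [left; apply Rinv_0_lt_compat; lra|].
  seg_facts M j.
  - pose proof (nn_lt M j H E). unfold Rmax, Rmin; dst; lra.
  - unfold Rmax, Rmin; dst; lra.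
Qed.

Lemma T_nonpos M x : Hyp M -> x <= 0 -> T M x = 0.
Proof.
  intros H Hx. unfold T. rewrite tau_term.
  transitivity (rsum (fun _ => 0) (ell M)); [|apply rsum_zero]. apply rsum_ext.
  intros j Hj. cbv beta. unfold term. pose proof (nn_nonneg M j H Hj).
  replace (Rmax 0 (Rmin x (seg_hi M x j) - Rmax 0 (nn M j))) with 0.
  { unfold Rdiv; ring. }
  unfold Rmax, Rmin; dst; lra.
Qed.

Lemma T_seg M k x : Hyp M -> (k < ell M)%nat -> nn M k <= x ->
  ((S k < ell M)%nat -> x <= nn M (S k)) ->
  T M x = T M (nn M k) + (x - nn M k) / Mcum M (S k).
Proof.
  intros H Hk Hx1 Hx2.
  assert (T M x - T M (nn M k) = (x - nn M k) / Mcum M (S k)); [|lra].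
  unfold T. rewrite !tau_term, <- rsum_minus.
  rewrite (rsum_single _ _ k Hk).
  - unfold term. rewrite <- div_split with (X := x - nn M k); [reflexivity|].
    pose proof (nn_nonneg M k H Hk). seg_facts M k.
    + specialize (Hx2 E). unfold Rmax, Rmin; dst; lra.
    + unfold Rmax, Rmin; dst; lra.
  - intros j Hj Hne. unfold term.
    pose proof (nn_nonneg M j H Hj).
    assert (Hz : Rmax 0 (Rmin x (seg_hi M x j) - Rmax 0 (nn M j)) =
                 Rmax 0 (Rmin (nn M k) (seg_hi M (nn M k) j) - Rmax 0 (nn M j))).
    { destruct (Nat.lt_ge_cases j k).
      - assert (nn M (S j) <= nn M k) by (apply nn_mono; auto; lia).
        pose proof (nn_lt M j H ltac:(lia)).
        seg_facts M j; [|lia]. unfold Rmax, Rmin; dst; lra.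
      - assert (nn M (S k) <= nn M j) by (apply nn_mono; auto; lia).
        specialize (Hx2 ltac:(lia)).
        seg_facts M j.
        + pose proof (nn_lt M j H E). unfold Rmax, Rmin; dst; lra.
        + unfold Rmax, Rmin; dst; lra. }
    rewrite Hz. unfold Rdiv. ring.
Qed.

Lemma T_nn M i : Hyp M -> (i < ell M)%nat -> T M (nn M i) = (w M 0 - w M i) / c M.
Proof.
  intros H Hi. pose proof H as [_ [_ [_ Hc]]]. induction i.
  - rewrite nn_0, T_nonpos by (auto; lra). field. lra.
  - rewrite (T_seg M i (nn M (S i))); auto; try lia.
    2:{ pose proof (nn_lt M i H Hi). lra. }
    2:{ intros; lra. }
    rewrite IHi by lia. rewrite (nn_step M i) by lra.
    pose proof (Mcum_pos M i H ltac:(lia)). field. lra.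
Qed.

Lemma filter_all (p : nat -> bool) (l : list nat) :
  (forall x, In x l -> p x = true) -> filter p l = l.
Proof.
  induction l; intros H; simpl; [reflexivity|]. rewrite H by (left; auto).
  rewrite IHl; auto. intros; apply H; right; auto.
Qed.

Lemma filter_prefix (p : nat -> bool) n :
  (forall i j, (i <= j)%nat -> (j < n)%nat -> p j = true -> p i = true) ->
  exists m, (m <= n)%nat /\ filter p (seq 0 n) = seq 0 m.
Proof.
  induction n; intros H; [exists 0%nat; split; auto|].
  rewrite seq_S, filter_app. simpl. destruct (p n) eqn:Ep.
  - exists (S n). split; auto. rewrite filter_all, seq_S; auto.
    intros x Hx. apply in_seq in Hx. apply (H x n); auto; lia.
  - destruct IHn as [m [Hm Heq]].
    { intros i j Hij Hj. apply H; lia. }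
    exists m. split; [lia|]. rewrite Heq, app_nil_r. reflexivity.
Qed.

Lemma kstar_spec M q : Hyp M -> 0 <= q ->
  (kstar M q < ell M)%nat /\ nn M (kstar M q) <= q.
Proof.
  intros H Hq. unfold kstar.
  set (p := fun i => if Rle_dec (nn M i) q then true else false).
  destruct (filter_prefix p (ell M)) as [m [Hm Heq]].
  { intros i j Hij Hj. unfold p. destruct (Rle_dec (nn M j) q); [|discriminate].
    intros _. destruct (Rle_dec (nn M i) q); auto.
    exfalso. pose proof (nn_mono M i j H Hij Hj). lra. }
  rewrite Heq, length_seq.
  assert (H0 : In 0%nat (filter p (seq 0 (ell M)))).
  { apply filter_In. split. apply in_seq. pose proof H as [Hl _]. lia.
    unfold p. rewrite nn_0. destruct (Rle_dec 0 q); auto. }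
  rewrite Heq in H0. apply in_seq in H0.
  assert (H1 : In (pred m) (filter p (seq 0 (ell M)))).
  { rewrite Heq. apply in_seq. lia. }
  apply filter_In in H1. destruct H1 as [H1 H2]. apply in_seq in H1.
  split; [lia|]. unfold p in H2. destruct (Rle_dec (nn M (pred m)) q); auto. discriminate.
Qed.

Lemma find_seg M x : Hyp M -> 0 < x ->
  exists k, (k < ell M)%nat /\ nn M k < x /\ ((S k < ell M)%nat -> x <= nn M (S k)).
Proof.
  intros H Hx.
  assert (G : forall m, (m < ell M)%nat -> exists k, (k <= m)%nat /\ nn M k < x /\
             ((k < m)%nat -> x <= nn M (S k))).
  { induction m; intros Hm.
    - exists 0%nat. rewrite nn_0. split; [lia|split; [lra|lia]].
    - destruct IHm as [k [Hk1 [Hk2 Hk3]]]; [lia|].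
      destruct (Nat.eq_dec k m).
      + subst k. destruct (Rlt_dec (nn M (S m)) x).
        * exists (S m). split; [lia|split; [lra|lia]].
        * exists m. split; [lia|split; [lra|intros; lra]].
      + exists k. split; [lia|split; [lra|intros; apply Hk3; lia]]. }
  pose proof H as [Hl _].
  destruct (G (ell M - 1)%nat ltac:(lia)) as [k [Hk1 [Hk2 Hk3]]].
  exists k. split; [lia|split; [lra|intros; apply Hk3; lia]].
Qed.

Lemma rate_lt_le M x k : Hyp M -> (k < ell M)%nat ->
  ((S k < ell M)%nat -> x <= nn M (S k)) -> rate_lt M x <= Mcum M (S k).
Proof.
  intros H Hk Hx. pose proof H as [_ [Hmu _]]. unfold rate_lt.
  rewrite (rsum_zero_tail _ (S k) (ell M)); [|lia|].
  - unfold Mcum. apply rsum_le. intros i Hi.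
    destruct (Rlt_dec (nn M i) x); [lra|]. left; apply Hmu; lia.
  - intros i Hi. assert (nn M (S k) <= nn M i) by (apply nn_mono; auto; lia).
    specialize (Hx ltac:(lia)). destruct (Rlt_dec (nn M i) x); [lra|auto].
Qed.

Lemma qb_aux M W n : c M <> 0 ->
  rsum (fun j => w M j * mu M j / c M) n =
  rsum (fun j => (w M j - W) * mu M j / c M) n + W / c M * rsum (mu M) n.
Proof. intros Hc. induction n; [rewrite !rsum_0; lra|]. rewrite !rsum_S, IHn. field. auto. Qed.

Lemma Qbar_eq M : Hyp M ->
  Qbar M = nn M (ell M - 1) + w M (ell M - 1) / c M * rsum (mu M) (ell M).
Proof.
  intros H. pose proof H as [Hl [_ [_ Hc]]].
  assert (G : forall n, rsum (fun j => w M j * mu M j / c M) (S n) =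
     nn M n + w M n / c M * rsum (mu M) (S n)).
  { intros n. rewrite !rsum_S, (qb_aux M (w M n) n) by lra. unfold nn. field. lra. }
  specialize (G (ell M - 1)%nat). replace (S (ell M - 1)) with (ell M) in G by lia.
  exact G.
Qed.

Lemma Mcum_nonneg M n : Hyp M -> (n <= ell M)%nat -> 0 <= Mcum M n.
Proof.
  intros [_ [Hmu _]] Hn. unfold Mcum. rewrite <- (rsum_zero n). apply rsum_le.
  intros; left; apply Hmu; lia.
Qed.

Lemma nnL_le_Qbar M : Hyp M -> 0 <= w M (ell M - 1) -> nn M (ell M - 1) <= Qbar M.
Proof.
  intros H Hw. pose proof H as [_ [_ [_ Hc]]]. rewrite Qbar_eq by auto.
  pose proof (Mcum_nonneg M (ell M) H (le_n _)). unfold Mcum in H0.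
  assert (0 <= w M (ell M - 1) / c M) by (unfold Rdiv; apply Rmult_le_pos; [lra|left; apply Rinv_0_lt_compat; lra]).
  assert (0 <= w M (ell M - 1) / c M * rsum (mu M) (ell M)) by (apply Rmult_le_pos; lra).
  lra.
Qed.

Lemma Qbar_nonneg M : Hyp M -> 0 <= w M (ell M - 1) -> 0 <= Qbar M.
Proof.
  intros H Hw. pose proof (nnL_le_Qbar M H Hw). pose proof H as [Hl _].
  pose proof (nn_nonneg M (ell M - 1) H ltac:(lia)). lra.
Qed.

Lemma T_Qbar M : Hyp M -> 0 <= w M (ell M - 1) -> T M (Qbar M) = w M 0 / c M.
Proof.
  intros H Hw. pose proof H as [Hl [_ [_ Hc]]].
  pose proof (nnL_le_Qbar M H Hw).
  rewrite (T_seg M (ell M - 1) (Qbar M) H ltac:(lia) H0 ltac:(intros; lia)).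
  rewrite T_nn by (auto; lia).
  pose proof (Mcum_pos M (ell M - 1) H ltac:(lia)).
  replace (S (ell M - 1)) with (ell M) in * by lia.
  rewrite Qbar_eq by auto. unfold Mcum in *. field. lra.
Qed.

Lemma pi_form M q : Hyp M -> 0 <= q <= Qbar M -> pi_star M q = w M 0 - c M * T M q.
Proof.
  intros H Hq. pose proof H as [_ [_ [_ Hc]]]. unfold pi_star.
  destruct (Rle_dec q (Qbar M)); [|lra].
  destruct (kstar_spec M q H ltac:(lra)) as [Hk1 Hk2].
  assert (0 <= nn M (kstar M q)) by (apply nn_nonneg; auto).
  rewrite tau_split by (auto; lra).
  rewrite T_nn by auto. field. lra.
Qed.

Lemma pi_nonneg M q : Hyp M -> 0 <= w M (ell M - 1) -> 0 <= q -> 0 <= pi_star M q.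
Proof.
  intros H Hw Hq. pose proof H as [_ [_ [_ Hc]]].
  destruct (Rle_dec q (Qbar M)).
  - rewrite pi_form by (auto; lra).
    pose proof (T_mono M q (Qbar M) H r). rewrite T_Qbar in H0 by auto.
    assert (c M * T M q <= c M * (w M 0 / c M)) by (apply Rmult_le_compat_l; lra).
    replace (c M * (w M 0 / c M)) with (w M 0) in H1 by (field; lra). lra.
  - unfold pi_star. destruct (Rle_dec q (Qbar M)); [contradiction|lra].
Qed.

Lemma pi_mono M q1 q2 : Hyp M -> 0 <= w M (ell M - 1) -> 0 <= q1 -> q1 <= q2 ->
  pi_star M q2 <= pi_star M q1.
Proof.
  intros H Hw Hq1 Hq12. pose proof H as [_ [_ [_ Hc]]].
  destruct (Rle_dec q2 (Qbar M)).
  - rewrite !pi_form by (auto; lra).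
    pose proof (T_mono M q1 q2 H Hq12).
    assert (c M * T M q1 <= c M * T M q2) by (apply Rmult_le_compat_l; lra). lra.
  - replace (pi_star M q2) with 0.
    + apply pi_nonneg; auto.
    + unfold pi_star. destruct (Rle_dec q2 (Qbar M)); [contradiction|lra].
Qed.

Lemma env_vel_cases M x : 0 <= env_vel M x \/
  (0 < x /\ env_vel M x = lam M - rate_lt M x /\ lam M - rate_lt M x < 0).
Proof.
  unfold env_vel.
  repeat match goal with |- context [Rlt_dec ?a ?b] => destruct (Rlt_dec a b) end;
  try (left; lra); right; auto.
Qed.

Lemma Tp_mono M x y : Hyp M -> x <= y -> Tp M x <= Tp M y.
Proof.
  intros H Hxy. unfold Tp. pose proof (T_mono M x y H Hxy).
  unfold Rmin; dst; lra.
Qed.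

Lemma Tp_cont M z : Hyp M -> continuity_pt (Tp M) z.
Proof.
  intros H. set (K := rsum (fun j => / Mcum M (S j)) (ell M)).
  assert (HK : 0 <= K).
  { unfold K. rewrite <- (rsum_zero (ell M)). apply rsum_le. intros.
    left; apply Rinv_0_lt_compat, Mcum_pos; auto. }
  apply (mono_lip_cont _ (K + 1)); [|lra].
  intros x y Hxy. split; [apply Tp_mono; auto|].
  unfold Tp. pose proof (T_lip M x y H Hxy). fold K in H0.
  assert (Rmin y 0 - Rmin x 0 <= y - x) by (unfold Rmin; dst; lra). nra.
Qed.

Lemma D_cont M (Qenv : R -> R) t : Hyp M -> continuity_pt Qenv t ->
  continuity_pt (fun u => u + Tp M (Qenv u)) t.
Proof.
  intros H Hq. change (continuity_pt (plus_fct id (comp (Tp M) Qenv)) t).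
  apply continuity_pt_plus.
  - apply derivable_continuous_pt, derivable_pt_id.
  - apply continuity_pt_comp; auto. apply Tp_cont; auto.
Qed.

Lemma D_local M (Qenv : R -> R) : Hyp M -> 0 < lam M ->
  (forall t, 0 <= t -> exists d, 0 < d /\
      forall u, t <= u <= t + d -> Qenv u = Qenv t + env_vel M (Qenv t) * (u - t)) ->
  forall t, 0 <= t -> exists d, 0 < d /\ forall u, t <= u <= t + d ->
     t + Tp M (Qenv t) <= u + Tp M (Qenv u).
Proof.
  intros H Hlam Hloc t Ht. destruct (Hloc t Ht) as [d [Hd Hu]].
  set (x := Qenv t) in *. set (v := env_vel M x) in *.
  destruct (env_vel_cases M x) as [Hv | [Hx [Hv Hneg]]]; fold v in Hv.
  - exists d. split; auto. intros u Hu'. rewrite (Hu u Hu').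
    assert (Tp M x <= Tp M (x + v * (u - t))) by (apply Tp_mono; auto; nra). lra.
  - destruct (find_seg M x H Hx) as [k [Hk [Hk1 Hk2]]].
    assert (Hdp : 0 < (x - nn M k) / (- v)) by (apply Rdiv_lt_0_compat; lra).
    exists (Rmin d ((x - nn M k) / (- v))). split; [apply Rmin_glb_lt; lra|].
    intros u Hu'.
    pose proof (Rmin_l d ((x - nn M k) / (- v))).
    pose proof (Rmin_r d ((x - nn M k) / (- v))).
    rewrite (Hu u ltac:(lra)). set (h := u - t).
    assert (Hh : 0 <= h <= (x - nn M k) / (- v)) by (unfold h; lra).
    assert (Hh2 : h * (- v) <= x - nn M k).
    { assert (h * (-v) <= (x - nn M k) / (-v) * (-v)) by (apply Rmult_le_compat_r; lra).
      replace ((x - nn M k) / (-v) * (-v)) with (x - nn M k) in H2 by (field; lra). lra. }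
    set (y := x + v * h).
    assert (Hy1 : nn M k <= y) by (unfold y; lra).
    assert (Hy2 : y <= x) by (unfold y; nra).
    pose proof (nn_nonneg M k H Hk).
    assert (E1 : Tp M x = T M x) by (unfold Tp; rewrite Rmin_right; lra).
    assert (E2 : Tp M y = T M y) by (unfold Tp; rewrite Rmin_right; lra).
    rewrite E1, E2.
    rewrite (T_seg M k x H Hk ltac:(lra) Hk2).
    rewrite (T_seg M k y H Hk Hy1 ltac:(intros Hs; specialize (Hk2 Hs); lra)).
    pose proof (Mcum_pos M k H Hk) as Hm. set (m := Mcum M (S k)) in *.
    pose proof (rate_lt_le M x k H Hk Hk2) as Hr. fold m in Hr.
    assert ((x - nn M k) / m - (y - nn M k) / m <= h); [|unfold h in *; lra].
    replace ((x - nn M k) / m - (y - nn M k) / m) with ((-v) * h / m)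
      by (unfold y; field; lra).
    apply (Rmult_le_reg_r m); [lra|].
    replace (- v * h / m * m) with (- v * h) by (field; lra). nra.
Qed.

Lemma tau_nonneg M a b : Hyp M -> 0 <= b <= a -> 0 <= tau M a b.
Proof. intros H Hb. rewrite tau_split by auto. pose proof (T_mono M b a H ltac:(lra)). lra. Qed.

Lemma reach_inv M Qenv l : forall t a t' a' X, reach M Qenv l t a t' a' -> Hyp M ->
  0 <= t -> X <= t + Tp M a -> (forall s, 0 <= s -> X <= s + Tp M (Qenv s)) ->
  0 <= t' /\ X <= t' + Tp M a'.
Proof.
  induction l as [|[b e] l IH]; intros t a t' a' X Hr H Ht HX Hall; simpl in Hr.
  - destruct Hr as [-> ->]. split; auto.
  - destruct Hr as [[Hb [He _]] Hr].
    pose proof (tau_nonneg M a b H Hb).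
    apply (IH _ _ _ _ X Hr H); try lra; try (apply Hall; lra).
Qed.

Lemma strict_below M k y : Hyp M -> (k < ell M)%nat -> y < nn M k -> Tp M y < T M (nn M k).
Proof.
  intros H Hk Hy. destruct k as [|k].
  - rewrite nn_0 in *. rewrite (T_nonpos M 0) by (auto; lra). unfold Tp.
    rewrite T_nonpos by (auto; lra). rewrite Rmin_left; lra.
  - pose proof (nn_lt M k H Hk). pose proof (nn_nonneg M k H ltac:(lia)).
    set (z := Rmax y (nn M k)).
    assert (Hz1 : nn M k <= z) by apply Rmax_r.
    assert (Hz2 : z < nn M (S k)) by (apply Rmax_lub_lt; lra).
    assert (Tp M y <= Tp M z) by (apply Tp_mono; auto; apply Rmax_l).
    assert (Tp M z = T M z) by (unfold Tp; rewrite Rmin_right; lra).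
    rewrite (T_seg M k z H ltac:(lia) Hz1 ltac:(intros; lra)) in H3.
    rewrite (T_seg M k (nn M (S k)) H ltac:(lia) ltac:(lra) ltac:(intros; lra)).
    pose proof (Mcum_pos M k H ltac:(lia)).
    assert ((z - nn M k) / Mcum M (S k) < (nn M (S k) - nn M k) / Mcum M (S k)).
    { unfold Rdiv. apply Rmult_lt_compat_r; [apply Rinv_0_lt_compat; lra|lra]. }
    lra.
Qed.

Theorem theorem1 (M : Model) (P : nat) :
  (1 <= ell M)%nat ->
  (forall i, (i < ell M)%nat -> 0 < mu M i) ->
  (forall i j, (i < j)%nat -> (j < ell M)%nat -> w M j < w M i) ->
  0 <= w M (ell M - 1) ->
  0 < lam M ->
  0 < c M ->
  (0 < P)%nat ->
  (* the joining threshold *)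
  Qbar M = nn M (ell M - 1) + w M (ell M - 1) / c M * rsum (mu M) (ell M) /\
  (* subgame perfection: at every state (q, Q0), with the others playing
     sigma*, sigma* is feasible, yields pi_star, and no deviation does better *)
  (forall Q0 q (Qenv : R -> R), 0 <= q <= Q0 -> env_path M Q0 Qenv ->
     plan_value M Qenv q (sigma_star_plan M q) (pi_star M q) /\
     (forall pl v, plan_value M Qenv q pl v -> v <= pi_star M q)) /\
  (* individual rationality *)
  (forall Q0 q, 0 <= Q0 -> 0 <= q <= Q0 -> 0 <= pi_star M q) /\
  (* envy-freeness *)
  (forall Q0 q1 q2, 0 <= q1 -> q1 <= q2 -> q2 <= Q0 -> pi_star M q2 <= pi_star M q1).
Proof.
  intros Hl Hmu Hw HwL Hlam Hc HP.
  assert (H : Hyp M) by (repeat split; auto).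
  pose proof (Qbar_nonneg M H HwL) as HQb.
  split; [apply Qbar_eq; auto|].
  split.
  2:{ split.
      - intros Q0 q _ Hq. apply pi_nonneg; auto; lra.
      - intros Q0 q1 q2 Hq1 Hq12 _. apply pi_mono; auto. }
  intros Q0 q Qenv Hq [H0 [Hcont Hloc]].
  assert (Dm : forall s, 0 <= s -> 0 + Tp M (Qenv 0) <= s + Tp M (Qenv s)).
  { intros s Hs.
    apply (mono_from_local (fun u => u + Tp M (Qenv u))); try lra.
    - intros t Ht. destruct (D_local M Qenv H Hlam Hloc t Ht) as [d [Hd Hu]].
      exists d. split; auto.
    - intros t Ht. apply D_cont; auto. }
  set (q0 := Rmin q (Qbar M)).
  assert (Hq0 : 0 <= q0) by (apply Rmin_glb; lra).
  assert (Hq0' : q0 <= Rmin Q0 (Qbar M)).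
  { unfold q0, Rmin. dst; lra. }
  assert (HTp0 : Tp M q0 = T M q0) by (unfold Tp; rewrite Rmin_right; lra).
  set (X := T M q0).
  assert (HX : forall s, 0 <= s -> X <= s + Tp M (Qenv s)).
  { intros s Hs. specialize (Dm s Hs). rewrite H0 in Dm.
    pose proof (Tp_mono M q0 (Rmin Q0 (Qbar M)) H Hq0'). unfold X. lra. }
  assert (HXpi : pi_star M q = w M 0 - c M * X).
  { unfold X, q0. destruct (Rle_dec q (Qbar M)).
    - rewrite Rmin_left by auto. apply pi_form; auto; lra.
    - rewrite Rmin_right by lra. rewrite T_Qbar by auto.
      unfold pi_star. destruct (Rle_dec q (Qbar M)); [contradiction|]. field. lra. }
  split.
  - unfold plan_value, sigma_star_plan. destruct (Rle_dec q (Qbar M)) as [Hle|Hgt].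
    + exists 0, (Rmin q (Qbar M)). simpl. split; [auto|].
      rewrite Rmin_left by auto.
      destruct (kstar_spec M q H ltac:(lra)) as [Hk1 Hk2].
      set (k := kstar M q) in *.
      pose proof (nn_nonneg M k H Hk1).
      split; [unfold seg_ok; repeat split; try lra; intros; auto|].
      split; [auto|]. split; [auto|]. split.
      * set (u := 0 + tau M q (nn M k) + 0).
        assert (Hu : u = T M q - T M (nn M k)) by (unfold u; rewrite tau_split by (auto; lra); lra).
        assert (Hu0 : 0 <= u) by (unfold u; pose proof (tau_nonneg M q (nn M k) H ltac:(lra)); lra).
        specialize (HX u Hu0).
        assert (X = T M q) by (unfold X, q0; rewrite Rmin_left; auto).
        destruct (Rle_dec (nn M k) (Qenv u)) as [|Hn]; auto.
        pose proof (strict_below M k (Qenv u) H Hk1 ltac:(lra)). lra.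
      * unfold pi_star. destruct (Rle_dec q (Qbar M)); [|contradiction]. fold k. ring.
    + exists 0, (Rmin q (Qbar M)). simpl. split; [auto|].
      rewrite Rmin_right by lra.
      split; [unfold seg_ok; repeat split; try lra; intros; auto|].
      rewrite tau_split by (auto; lra).
      unfold pi_star. destruct (Rle_dec q (Qbar M)); [contradiction|]. ring.
  - intros pl v [t1 [a1 [Hr [Hs Hact]]]].
    destruct pl as [mv [b e] ac]; simpl in *.
    assert (HXs : X <= 0 + Tp M q0) by (rewrite HTp0; unfold X; lra).
    destruct (reach_inv M Qenv mv 0 q0 t1 a1 X Hr H ltac:(lra) HXs HX) as [Ht1 HX1].
    destruct Hs as [Hb [He _]].
    assert (HTa : Tp M a1 = T M a1) by (unfold Tp; rewrite Rmin_right; lra).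
    destruct ac as [i|].
    + destruct Hact as [Hi [Hbi [_ Hv]]]. subst v b.
      rewrite tau_split, T_nn in * by (auto; lra). rewrite HXpi.
      assert (c M * X <= c M * (t1 + T M a1 + e)) by (apply Rmult_le_compat_l; lra).
      replace (w M i - c M * (t1 + (T M a1 - (w M 0 - w M i) / c M) + e))
        with (w M 0 - c M * (t1 + T M a1 + e)) by (field; lra).
      lra.
    + subst v. pose proof (tau_nonneg M a1 b H ltac:(lra)).
      pose proof (pi_nonneg M q H HwL ltac:(lra)).
      assert (0 <= c M * (t1 + tau M a1 b + e)) by (apply Rmult_le_pos; lra). lra.
Qed.
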